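(* Let $f$ be a permutation of $\mathbb{F}_q$, extended to a permutation of $\mathbb{P}^1(\mathbb{F}_q)$ fixing $\infty$, and let $k\ge1$. If $$f=\mu(x)\circ x^{q-2}\circ(x-a_k)\circ x^{q-2}\circ(x-a_{k-1})\circ\cdots\circ x^{q-2}\circ(x-a_1)$$ with $a_1,\dots,a_k\in\mathbb{F}_q$ and $\mu\in\mathbb{F}_q(x)$ of degree one, then $\mu$ is a degree-one polynomial in $\mathbb{F}_q[x]$. Consequently the set of all such representations of $f$ (tuples $(\mu;a_1,\dots,a_k)$ with $\mu\in\mathbb{F}_q[x]$ of degree one) is in bijection with the set of all representations $f=\nu(x)\circ(b_1,\infty)\circ\cdots\circ(b_k,\infty)$ with $b_1,\dots,b_k\in\mathbb{F}_q$ and $\nu\in\mathbb{F}_q(x)$ of degree one.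
   Context: Let $q>2$ be a prime power, $\mathbb{F}_q$ the field with $q$ elements, $\mathbb{P}^1(\mathbb{F}_q)=\mathbb{F}_q\cup\{\infty\}$. Degree-one rational functions in $\mathbb{F}_q(x)$ act on $\mathbb{P}^1(\mathbb{F}_q)$ with the usual conventions. $x^{q-2}$ acts on $\mathbb{P}^1(\mathbb{F}_q)$ by fixing $0$ and $\infty$ and sending $c\in\mathbb{F}_q^*$ to $c^{-1}$. For $b\in\mathbb{F}_q$, $(b,\infty)$ is the transposition of $\mathbb{P}^1(\mathbb{F}_q)$ swapping $b$ and $\infty$. Composition is $(f\circ g)(x)=f(g(x))$, and equalities are of permutations of $\mathbb{P}^1(\mathbb{F}_q)$. *)

(* Defs.v *)
From HB Require Import structures.
From mathcomp Require Import all_boot all_order all_algebra all_fingroup all_field.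
From mathcomp Require Import fraction.
Set Implicit Arguments. Unset Strict Implicit. Unset Printing Implicit Defensive.
Import GRing.Theory.
Local Open Scope ring_scope.

Notation tofrac := (@FracField.tofrac _).

Section Defs.
Variable F : fieldType.

(* P^1(F) = F u {oo}, with None standing for oo *)
Definition P1 := option F.

Definition ratfun (a b c d : F) : {fraction {poly F}} :=
  (tofrac (a%:P * 'X + b%:P) / tofrac (c%:P * 'X + d%:P)).

(* its action on P^1(F), usual conventions (assuming a d - b c <> 0) *)
Definition mob_act (a b c d : F) (P : P1) : P1 :=
  match P with
  | Some x => if c * x + d == 0 then None else Some ((a * x + b) / (c * x + d))
  | None => if c == 0 then None else Some (a / c)
  end.

Definition acts (mu : {fraction {poly F}}) (sigma : P1 -> P1) : Prop :=
  exists a b c d : F, a * d - b * c != 0 /\ mu = ratfun a b c d /\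
     forall P, sigma P = mob_act a b c d P.

Definition is_deg1_poly (mu : {fraction {poly F}}) : Prop :=
  exists p : {poly F}, size p = 2%N /\ mu = tofrac p.

(* x^(q-2): fixes 0 and oo, c |-> c^-1 on F^* *)
Definition inv_act (P : P1) : P1 := omap (fun x => x^-1) P.
Definition shift_act (a : F) (P : P1) : P1 := omap (fun x => x - a) P.
Definition transp_act (b : F) (P : P1) : P1 :=
  match P with
  | None => Some b
  | Some x => if x == b then None else Some x
  end.

(* x^(q-2) o (x - a_k) o ... o x^(q-2) o (x - a_1), with s = [a_1; ...; a_k] *)
Definition chainA (s : seq F) (P : P1) : P1 :=
  foldl (fun Q a => inv_act (shift_act a Q)) P s.
(* (b_1, oo) o ... o (b_k, oo), with s = [b_1; ...; b_k] *)
Definition chainB (s : seq F) (P : P1) : P1 :=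
  foldr (fun b Q => transp_act b Q) P s.

Definition ext (f : F -> F) (P : P1) : P1 := omap f P.

Definition repA (f : F -> F) (mu : {fraction {poly F}}) (s : seq F) : Prop :=
  exists sigma, acts mu sigma /\ forall P, ext f P = sigma (chainA s P).
Definition repB (f : F -> F) (nu : {fraction {poly F}}) (s : seq F) : Prop :=
  exists sigma, acts nu sigma /\ forall P, ext f P = sigma (chainB s P).

End Defs.

(* Main.v *)
Require Import Defs.
From HB Require Import structures.
From mathcomp Require Import all_boot all_order all_algebra all_fingroup all_field.
From mathcomp Require Import fraction.
From mathcomp Require Import ring.
Import GRing.Theory.
Local Open Scope ring_scope.

Section Mob.
Variable F : fieldType.

Lemma mob_comp (a b c d a' b' c' d' : F) (P : P1 F) :
  a*d - b*c != 0 -> a'*d' - b'*c' != 0 ->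
  mob_act a b c d (mob_act a' b' c' d' P) =
  mob_act (a*a' + b*c') (a*b' + b*d') (c*a' + d*c') (c*b' + d*d') P.
Proof.
move=> H H'; case: P => [x|]; rewrite /mob_act.
- case: (eqVneq (c'*x + d') 0) => Hd.
  + have Hn : a'*x + b' != 0.
      apply/eqP => Hn.
      have E : (a'*d' - b'*c')*x = d'*(a'*x+b') - b'*(c'*x+d') by ring.
      rewrite Hn Hd !mulr0 subrr in E.
      move/eqP: E; rewrite mulf_eq0 (negbTE H') /= => /eqP x0.
      move: Hn Hd H'; rewrite x0 !mulr0 !add0r => -> ->.
      by rewrite mulr0 mul0r subrr eqxx.
    idtac.
    have E : (c*a'+d*c')*x + (c*b'+d*d') = c*(a'*x+b') + d*(c'*x+d') by ring.
    rewrite E Hd mulr0 addr0 mulf_eq0 (negbTE Hn) orbF.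
    case: eqP => Hc //; congr Some.
    have E2 : (a*a'+b*c')*x + (a*b'+b*d') = a*(a'*x+b') + b*(c'*x+d') by ring.
    rewrite E2 Hd mulr0 addr0. field. by apply/andP; split => //; apply/eqP.
  + idtac.
    have E : (c*a'+d*c')*x + (c*b'+d*d') =
       (c*((a'*x+b')/(c'*x+d'))+d)*(c'*x+d') by field.
    rewrite E mulf_eq0 (negbTE Hd) orbF.
    case: eqP => Hc //; congr Some. field.
    have E3 : c*(a'*x+b') + d*(c'*x+d') = (c*((a'*x+b')/(c'*x+d'))+d)*(c'*x+d') by field.
    by rewrite Hd E3 mulf_neq0 //; apply/eqP.
- case: (eqVneq c' 0) => Hc'.
  + have Ha : a' != 0 by apply: contraNneq H' => ->; rewrite Hc' !mul0r mulr0 subrr.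
    rewrite Hc' mulr0 addr0 mulf_eq0 (negbTE Ha) orbF.
    case: eqP => Hc //; congr Some; rewrite mulr0 addr0. field. by apply/andP; split => //; apply/eqP.
  + idtac.
    have E : c*a' + d*c' = (c*(a'/c')+d)*c' by field.
    rewrite E mulf_eq0 (negbTE Hc') orbF.
    case: eqP => Hc //; congr Some. field.
    by rewrite Hc' E mulf_neq0 //; apply/eqP.
Qed.

Lemma mob_scalar (l : F) (P : P1 F) : l != 0 -> mob_act l 0 0 l P = P.
Proof.
move=> Hl; case: P => [x|]; rewrite /mob_act ?eqxx //.
by rewrite mul0r add0r (negbTE Hl) addr0 mulrC mulKf.
Qed.

Lemma mob_adj (a b c d : F) (P : P1 F) : a*d - b*c != 0 ->
  mob_act d (-b) (-c) a (mob_act a b c d P) = P.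
Proof.
move=> H.
have H2 : d*a - (-b)*(-c) != 0 by rewrite mulrNN mulrC.
rewrite mob_comp //.
have -> : d*a + -b*c = a*d - b*c by ring.
have -> : d*b + -b*d = 0 by ring.
have -> : -c*a + a*c = 0 by ring.
have -> : -c*b + a*d = a*d - b*c by ring.
by rewrite mob_scalar.
Qed.

Lemma mob_idP (e f g h : F) : (forall P : P1 F, mob_act e f g h P = P) ->
  [/\ f = 0, g = 0 & e = h].
Proof.
move=> HP.
have Hg : g = 0.
  move: (HP None); rewrite /mob_act; by case: eqP.
move: (HP (Some 0)) (HP (Some 1)); rewrite /mob_act Hg !mul0r !add0r mulr0 add0r.
case: eqP => // Hh [] /eqP; rewrite mulf_eq0 invr_eq0 (negbTE (introN eqP Hh)) orbF => /eqP Hf.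
rewrite Hf addr0 mulr1 => [[]] He.
by split => //; rewrite -(divfK (introN eqP Hh) e) He mul1r.
Qed.

Lemma polyXC_neq0 (c d : F) : (c != 0) || (d != 0) -> c%:P * 'X + d%:P != 0.
Proof.
move=> H; apply/eqP => H0.
have h0 := congr1 (fun p : {poly F} => p`_0) H0.
have h1 := congr1 (fun p : {poly F} => p`_1) H0.
move: h0 h1; rewrite /= !coefD !coefCM !coefX !coefC /= => h0 h1.
move: H; rewrite mulr0 add0r in h0; rewrite mulr1 addr0 in h1.
by rewrite h0 h1 eqxx.
Qed.

Lemma expandP (a b c d : F) : (a%:P * 'X + b%:P) * (c%:P * 'X + d%:P) =
  (a*c)%:P * 'X^2 + (a*d + b*c)%:P * 'X + (b*d)%:P :> {poly F}.
Proof. rewrite !polyCD !polyCM; ring. Qed.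

Lemma ratfun_cross (a b c d a' b' c' d' : F) :
  (c != 0) || (d != 0) -> (c' != 0) || (d' != 0) ->
  a * c' = a' * c -> b * d' = b' * d -> a * d' + b * c' = a' * d + b' * c ->
  ratfun a b c d = ratfun a' b' c' d'.
Proof.
move=> H H' E1 E2 E3; rewrite /ratfun.
apply/eqP; rewrite eqr_div; last 2 first.
- by rewrite tofrac_eq0 polyXC_neq0.
- by rewrite tofrac_eq0 polyXC_neq0.
by rewrite -!rmorphM /= !expandP E1 E2 E3.
Qed.


Lemma nz_cd (a b c d : F) : a*d - b*c != 0 -> (c != 0) || (d != 0).
Proof.
apply: contraNT; rewrite negb_or !negbK => /andP[/eqP -> /eqP ->].
by rewrite !mulr0 subrr.
Qed.

Lemma acts_unique (mu mu' : {fraction {poly F}}) (s s' : P1 F -> P1 F) :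
  acts mu s -> acts mu' s' -> (forall P, s P = s' P) -> mu = mu'.
Proof.
move=> [a [b [c [d [H [-> Hs]]]]]] [a' [b' [c' [d' [H' [-> Hs']]]]]] Hss.
have H2 : d'*a' - (-b')*(-c') != 0 by rewrite mulrNN mulrC.
have Hid : forall P, mob_act (d'*a + -b'*c) (d'*b + -b'*d) (-c'*a + a'*c)
    (-c'*b + a'*d) P = P.
  move=> P; rewrite -mob_comp // -Hs Hss Hs'; exact: mob_adj.
case: (mob_idP _ _ _ _ Hid) => Hf Hg Heh.
apply: ratfun_cross; [exact: (nz_cd _ _ _ _ H) | exact: (nz_cd _ _ _ _ H') | | |].
- have: a*c' - a'*c = -( -c'*a + a'*c) by ring.
  by rewrite Hg oppr0 => /eqP; rewrite subr_eq0 => /eqP.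
- have: b*d' - b'*d = d'*b + -b'*d by ring.
  by rewrite Hf => /eqP; rewrite subr_eq0 => /eqP.
- have: (a*d' + b*c') - (a'*d + b'*c) = (d'*a + -b'*c) - (-c'*b + a'*d) by ring.
  by rewrite Heh subrr => /eqP; rewrite subr_eq0 => /eqP.
Qed.

Lemma acts_comp (mu : {fraction {poly F}}) (s : P1 F -> P1 F) (a b c d : F) :
  acts mu s -> a*d - b*c != 0 ->
  exists mu', acts mu' (fun P => s (mob_act a b c d P)).
Proof.
move=> [a' [b' [c' [d' [H' [_ Hs]]]]]] H.
exists (ratfun (a'*a + b'*c) (a'*b + b'*d) (c'*a + d'*c) (c'*b + d'*d)).
do 4 eexists; split; last split; first last.
- by move=> P; rewrite Hs mob_comp.
- by [].
have -> : (a'*a + b'*c)*(c'*b + d'*d) - (a'*b + b'*d)*(c'*a + d'*c) =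
  (a'*d' - b'*c')*(a*d - b*c) by ring.
by rewrite mulf_neq0.
Qed.


Definition chainAinv (s : seq F) (Q : P1 F) : P1 F :=
  foldr (fun a Q => shift_act (-a) (inv_act Q)) Q s.

Lemma chainA_cons (a : F) (s : seq F) (P : P1 F) : chainA (a :: s) P = chainA s (inv_act (shift_act a P)).
Proof. by []. Qed.

Lemma chainA_rcons (s : seq F) (a : F) (P : P1 F) : chainA (rcons s a) P = inv_act (shift_act a (chainA s P)).
Proof. by rewrite /chainA foldl_rcons. Qed.

Lemma chainB_rcons (s : seq F) (b : F) (P : P1 F) : chainB (rcons s b) P = chainB s (transp_act b P).
Proof. by rewrite /chainB foldr_rcons. Qed.

Lemma chainAinv_cons (a : F) (s : seq F) (P : P1 F) :
  chainAinv (a :: s) P = shift_act (-a) (inv_act (chainAinv s P)).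
Proof. by []. Qed.

Lemma chainAK (s : seq F) (P : P1 F) : chainAinv s (chainA s P) = P.
Proof.
elim: s P => [|a s IH] P //; rewrite chainA_cons chainAinv_cons IH.
by case: P => [x|] /=; rewrite ?invrK ?opprK ?subrK.
Qed.

Lemma chainAKinv (s : seq F) (P : P1 F) : chainA s (chainAinv s P) = P.
Proof.
elim: s P => [|a s IH] P //; rewrite chainA_cons chainAinv_cons.
by case: (chainAinv s P) (IH P) => [x|] //= <-; rewrite opprK addrK invrK.
Qed.

Lemma chainA_None (s : seq F) : chainA s None = None.
Proof. by elim: s => [|a s IH] //=. Qed.

Lemma chainA_Some (s : seq F) (x : F) : exists y, chainA s (Some x) = Some y.
Proof.
elim: s x => [|a s IH] x /=; first by exists x.
exact: IH.
Qed.

Lemma chainAinv_Some (s : seq F) (x : F) : exists y, chainAinv s (Some x) = Some y.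
Proof.
elim: s x => [|a s IH] x /=; first by exists x.
by case: (IH x) => y ->; eexists.
Qed.

Lemma chainB_surj (s : seq F) (Q : P1 F) : exists P, chainB s P = Q.
Proof.
elim: s Q => [|b s IH] Q; first by exists Q.
case: (IH (transp_act b Q)) => P HP; exists P => /=; rewrite HP.
case: Q {HP} => [x|] /=; last by rewrite eqxx.
case: eqP => [->|/eqP H] //=; by rewrite (negbTE H).
Qed.

Fixpoint phi_aux (pre s : seq F) : seq F :=
  match s with
  | [::] => [::]
  | a :: s' => odflt 0 (chainAinv pre (Some a)) :: phi_aux (rcons pre a) s'
  end.

Fixpoint psi_aux (pre s : seq F) : seq F :=
  match s with
  | [::] => [::]
  | b :: s' => let a := odflt 0 (chainA pre (Some b)) in a :: psi_aux (rcons pre a) s'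
  end.

Definition phi s := phi_aux [::] s.
Definition psi s := psi_aux [::] s.

Lemma phi_aux_rcons (pre s : seq F) (a : F) :
  phi_aux pre (rcons s a) = rcons (phi_aux pre s) (odflt 0 (chainAinv (pre ++ s) (Some a))).
Proof.
elim: s pre => [|x s IH] pre /=; first by rewrite cats0.
by rewrite IH cat_rcons.
Qed.

Lemma size_phi_aux (pre s : seq F) : size (phi_aux pre s) = size s.
Proof. by elim: s pre => [|x s IH] pre //=; rewrite IH. Qed.

Lemma size_psi_aux (pre s : seq F) : size (psi_aux pre s) = size s.
Proof. by elim: s pre => [|x s IH] pre //=; rewrite IH. Qed.

Lemma phi_psi_aux (pre t : seq F) : phi_aux pre (psi_aux pre t) = t.
Proof.
elim: t pre => [|b t IH] pre //=; rewrite IH; congr cons.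
case: (chainA_Some pre b) => y Hy; rewrite Hy /= -Hy chainAK //.
Qed.

Lemma psi_phi_aux (pre s : seq F) : psi_aux pre (phi_aux pre s) = s.
Proof.
elim: s pre => [|a s IH] pre //=.
case: (chainAinv_Some pre a) => y Hy; rewrite Hy /= -Hy chainAKinv /= IH //.
Qed.

Lemma chain_rel (s : seq F) : exists a b c d : F, a*d - b*c != 0 /\
  forall P, chainA s P = mob_act a b c d (chainB (phi s) P).
Proof.
elim/last_ind: s => [|s a [a0 [b0 [c0 [d0 [H HM]]]]]].
  exists 1, 0, 0, 1; split; first by rewrite mulr1 mulr0 subr0 oner_eq0.
  by move=> P; rewrite mob_scalar // oner_eq0.
have H1 : (0:F) * (-a) - 1 * 1 != 0 by rewrite mul0r mul1r sub0r oppr_eq0 oner_eq0.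
exists (0*a0 + 1*c0), (0*b0 + 1*d0), (1*a0 + -a*c0), (1*b0 + -a*d0); split.
  have -> : (0*a0 + 1*c0)*(1*b0 + -a*d0) - (0*b0 + 1*d0)*(1*a0 + -a*c0) =
    (0 * (-a) - 1*1)*(a0*d0 - b0*c0) by ring.
  by rewrite mulf_neq0.
move=> P; rewrite -mob_comp // /phi phi_aux_rcons cat0s -/(phi s).
set b := odflt 0 _.
have Cb : chainA s (Some b) = Some a.
  rewrite /b; case: (chainAinv_Some s a) => y Hy; rewrite Hy /= -Hy.
  exact: chainAKinv.
rewrite chainA_rcons chainB_rcons -HM.
case: P => [x|] /=.
- case: eqP => [->|Hxb].
  + by rewrite Cb chainA_None /= subrr invr0 /mob_act oner_eq0 mul0r.
  + case: (chainA_Some s x) => y Hy; rewrite Hy /mob_act /=.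
    have Hya : y - a != 0.
      apply/eqP => /eqP; rewrite subr_eq0 => /eqP Hya; apply: Hxb.
      have := chainAK s (Some x); rewrite Hy Hya -Cb chainAK; by case.
    by rewrite mul1r (negbTE Hya) mul0r add0r div1r.
- by rewrite chainA_None /= Cb /mob_act mul1r subrr eqxx.
Qed.


Lemma repA_deg1 (f : F -> F) mu (s : seq F) : repA f mu s -> is_deg1_poly mu.
Proof.
move=> [sigma [[a [b [c [d [H [-> Hs]]]]]] Hf]].
have Hc : c = 0.
  move: (Hf None); rewrite /= chainA_None Hs /mob_act; by case: eqP.
move: H; rewrite Hc mulr0 subr0 mulf_eq0 negb_or => /andP[Ha Hd].
exists ((a/d)%:P * 'X + (b/d)%:P); split.
  by rewrite size_MXaddC polyC_eq0 mulf_eq0 invr_eq0 (negbTE Ha) (negbTE Hd) /= size_polyC mulf_neq0 // invr_neq0.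
have -> : ratfun a b 0 d = ratfun (a/d) (b/d) 0 1.
  apply: ratfun_cross; rewrite ?oner_eq0 ?Hd ?orbT //.
  - by rewrite !mulr0.
  - by rewrite mulr1 divfK.
  - by rewrite !mulr0 !addr0 mulr1 divfK.
by rewrite /ratfun polyC0 mul0r add0r polyC1 rmorph1 divr1.
Qed.

Lemma repA_to_B (f : F -> F) mu (s : seq F) :
  repA f mu s -> exists nu, repB f nu (phi s).
Proof.
move=> [sigma [Hmu Hf]].
case: (chain_rel s) => [a [b [c [d [H HM]]]]].
case: (acts_comp _ _ _ _ _ _ Hmu H) => nu Hnu.
by exists nu, (fun P => sigma (mob_act a b c d P)); split => // P; rewrite Hf HM.
Qed.

Lemma repB_to_A (f : F -> F) nu (t : seq F) :
  repB f nu t -> exists mu, repA f mu (psi t).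
Proof.
move=> [sigma [Hnu Hf]].
case: (chain_rel (psi t)) => [a [b [c [d [H HM]]]]].
have H2 : d*a - (-b)*(-c) != 0 by rewrite mulrNN mulrC.
case: (acts_comp _ _ _ _ _ _ Hnu H2) => mu Hmu.
exists mu, (fun P => sigma (mob_act d (-b) (-c) a P)); split => // P.
by rewrite Hf HM mob_adj // /phi /psi phi_psi_aux.
Qed.

Lemma repA_uniq (f : F -> F) mu mu' (s : seq F) :
  repA f mu s -> repA f mu' s -> mu = mu'.
Proof.
move=> [sigma [Hmu Hf]] [sigma' [Hmu' Hf']].
apply: (acts_unique _ _ _ _ Hmu Hmu') => Q.
by rewrite -(chainAKinv s Q) -Hf -Hf'.
Qed.

Lemma repB_uniq (f : F -> F) mu mu' (s : seq F) :
  repB f mu s -> repB f mu' s -> mu = mu'.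
Proof.
move=> [sigma [Hmu Hf]] [sigma' [Hmu' Hf']].
apply: (acts_unique _ _ _ _ Hmu Hmu') => Q.
by case: (chainB_surj s Q) => P <-; rewrite -Hf -Hf'.
Qed.

End Mob.
Arguments phi {F}. Arguments psi {F}.
Arguments repA_to_B {F f mu s}. Arguments repB_to_A {F f nu t}.
Arguments repA_deg1 {F f mu s}. Arguments repA_uniq {F f mu mu' s}.
Arguments repB_uniq {F f mu mu' s}.

From Stdlib Require Import ProofIrrelevance ClassicalEpsilon.

Lemma sig_eqP (T : Type) (P : T -> Prop) (x y : {t | P t}) : sval x = sval y -> x = y.
Proof. case: x => x px; case: y => y py /= E; subst y; f_equal; apply: proof_irrelevance. Qed.

Theorem corollary4p1 (F : finFieldType) (hq : (2 < #|F|)%N) (f : {perm F})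
    (k : nat) (hk : (0 < k)%N) :
  (forall (mu : {fraction {poly F}}) (a : k.-tuple F),
      repA f mu a -> is_deg1_poly mu) /\
  exists g : {x : {fraction {poly F}} * k.-tuple F |
                is_deg1_poly x.1 /\ repA f x.1 x.2} ->
             {y : {fraction {poly F}} * k.-tuple F | repB f y.1 y.2},
    bijective g.
Proof.
split; first by move=> mu a; apply: repA_deg1.
have szphi (t : k.-tuple F) : size (phi t) == k by rewrite /phi size_phi_aux size_tuple.
have szpsi (t : k.-tuple F) : size (psi t) == k by rewrite /psi size_psi_aux size_tuple.
pose phit (t : k.-tuple F) : k.-tuple F := Tuple (szphi t).
pose psit (t : k.-tuple F) : k.-tuple F := Tuple (szpsi t).
pose DA := {x : {fraction {poly F}} * k.-tuple F | is_deg1_poly x.1 /\ repA f x.1 x.2}.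
pose DB := {y : {fraction {poly F}} * k.-tuple F | repB f y.1 y.2}.
have HAB (x : DA) : exists y : DB, (sval y).2 = phit (sval x).2.
  case: x => [[mu a] [_ Hr]] /=.
  case: (repA_to_B Hr) => nu Hnu.
  by exists (exist _ (nu, phit a) Hnu).
have HBA (y : DB) : exists x : DA, (sval x).2 = psit (sval y).2.
  case: y => [[nu b] Hr] /=.
  case: (repB_to_A Hr) => mu Hmu.
  by exists (exist _ (mu, psit b) (conj (repA_deg1 Hmu) Hmu)).
pose g (x : DA) : DB := proj1_sig (constructive_indefinite_description _ (HAB x)).
pose h (y : DB) : DA := proj1_sig (constructive_indefinite_description _ (HBA y)).
exists g, h.
- move=> x; rewrite /h /g.
  case: (constructive_indefinite_description _ (HAB x)) => y Hy /=.
  case: (constructive_indefinite_description _ (HBA y)) => z Hz /=.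
  apply: sig_eqP; move: x Hy => [[mu a] [dx Hx]] /= Hy.
  move: z Hz => [[mu' a'] [dz Hz]] /= Ez.
  have Ea : a' = a by apply: val_inj; rewrite Ez Hy /= /psi /phi psi_phi_aux.
  move: Hz; rewrite /= Ea => Hz; by rewrite (repA_uniq Hz Hx).
- move=> y; rewrite /h /g.
  case: (constructive_indefinite_description _ (HBA y)) => x Hx /=.
  case: (constructive_indefinite_description _ (HAB x)) => z Hz /=.
  apply: sig_eqP; move: y Hx => [[mu a] Hy] /= Hx.
  move: z Hz => [[mu' a'] Hz] /= Ez.
  have Ea : a' = a by apply: val_inj; rewrite Ez Hx /= /psi /phi phi_psi_aux.
  move: Hz; rewrite /= Ea => Hz; by rewrite (repB_uniq Hz Hy).
Qed.
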